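(* Let \[ A = \begin{bmatrix} 0 & 1 & -1 & 1 \\ 1 & 0 & 1 & 0 \\ 1 & 1 & 0 & 0 \end{bmatrix}. \] Then $A$ is totally unimodular, but its $2$-fold $I$-sum \[ I\text{-sum}_2(A) = \begin{bmatrix} I & I \\ A & 0 \\ 0 & A \end{bmatrix} \] (a $10 \times 8$ matrix, where $I$ is the $4\times 4$ identity matrix) is not totally unimodular: the $6\times 6$ submatrix $S$ formed by rows $1,4,5,7,8,9$ and columns $1,2,4,5,7,8$ of $I\text{-sum}_2(A)$ satisfies $\det S = -2$.
   Context: A matrix is totally unimodular if each of its square submatrices has determinant in $\{0,\pm 1\}$. For an integer $N \geq 1$, the $N$-fold $I$-sum of an $m \times n$ matrix $A$ is the $(mN+n) \times nN$ matrix \[ I\text{-sum}_N(A) := \begin{bmatrix} I & I & \cdots & I \\ A & & & \\ & A & & \\ & & \ddots & \\ & & & A \end{bmatrix}, \] where $I$ is the $n \times n$ identity matrix, $N$ copies of which are included in the top block row, and unspecified entries are zero. *)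

(* Defs.v *)
From mathcomp Require Import all_boot all_order all_algebra.
Set Implicit Arguments. Unset Strict Implicit. Unset Printing Implicit Defensive.
Import GRing.Theory Num.Theory.
Local Open Scope ring_scope.

Definition incr_sel (k m : nat) (f : 'I_k -> 'I_m) : Prop :=
  forall i j : 'I_k, (i < j)%N -> (f i < f j)%N.

Definition totally_unimodular (m n : nat) (A : 'M[int]_(m, n)) : Prop :=
  forall (k : nat) (f : 'I_k -> 'I_m) (g : 'I_k -> 'I_n),
    incr_sel f -> incr_sel g ->
    let d := \det (mxsub f g A) in d = 0 \/ d = 1 \/ d = -1.

(* The N-fold I-sum of an m x n matrix A: (m*N + n) x (n*N) matrix
   [ I I ... I ; A 0 ... 0 ; 0 A ... 0 ; ... ; 0 ... 0 A ].
   Row i < n is the top block row (identity blocks);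
   row n + r (r < m*N) is row (r mod m) of the copy of A in block (r / m). *)
Definition Isum (N m n : nat) (A : 'M[int]_(m, n)) : 'M[int]_(m * N + n, n * N) :=
  \matrix_(i < m * N + n, j < n * N)
    if (i < n)%N then (if (j %% n == i)%N then 1 else 0)
    else let r := (i - n)%N in
         if (j %/ n == r %/ m)%N then
           (if (r %% m < m)%N && (j %% n < n)%N =P true is ReflectT H then
              let: conj Ha Hb := andP H in A (Ordinal Ha) (Ordinal Hb)
            else 0)
         else 0.

Definition A0 : 'M[int]_(3, 4) :=
  \matrix_(i < 3, j < 4)
    nth 0 (nth [::] [:: [:: 0; 1; -1; 1]; [:: 1; 0; 1; 0]; [:: 1; 1; 0; 0]] i) j.

(* Selected rows 1,4,5,7,8,9 and columns 1,2,4,5,7,8 (1-indexed) as 0-indexed. *)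
Definition selRows : 'I_6 -> 'I_(3 * 2 + 4) :=
  fun i => inord (nth 0%N [:: 0; 3; 4; 6; 7; 8]%N i).
Definition selCols : 'I_6 -> 'I_(4 * 2) :=
  fun i => inord (nth 0%N [:: 0; 1; 3; 4; 6; 7]%N i).

(* Main.v *)
Require Import Defs.
From mathcomp Require Import all_boot all_order all_algebra.
Set Implicit Arguments. Unset Strict Implicit. Unset Printing Implicit Defensive.
Import GRing.Theory Num.Theory.
Local Open Scope ring_scope.

Fixpoint ldet (n : nat) (F : nat -> nat -> int) : int :=
  match n with
  | 0 => 1
  | n'.+1 => foldr (fun j acc => F 0%N j * ((-1) ^+ j * ldet n' (fun i j' => F i.+1 (bump j j'))) + acc) 0 (iota 0 n'.+1)
  end.

Lemma big_foldr_int (s : seq nat) (G : nat -> int) :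
  \sum_(i <- s) G i = foldr (fun i acc => G i + acc) 0 s.
Proof. by elim: s => [|x s IH]; rewrite ?big_nil ?big_cons ?IH. Qed.

Lemma det_ldet n (M : 'M[int]_n) (F : nat -> nat -> int) :
  (forall i j : 'I_n, M i j = F i j) -> \det M = ldet n F.
Proof.
elim: n M F => [|n IH] M F HM; first by rewrite det_mx00.
rewrite (expand_det_row M ord0).
transitivity (\sum_(0 <= j < n.+1) F 0%N j * ((-1) ^+ j * ldet n (fun i j' => F i.+1 (bump j j')))); last by rewrite big_foldr_int.
rewrite big_mkord.
apply: eq_bigr => j _.
rewrite HM /cofactor add0n; congr (_ * (_ * _)).
apply: IH => i j'; rewrite !mxE; apply: HM.
Qed.

Definition a0f (i j : nat) : int :=
  nth 0 (nth [::] [:: [:: 0; 1; -1; 1]; [:: 1; 0; 1; 0]; [:: 1; 1; 0; 0]] i) j.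

Lemma A0E (i : 'I_3) (j : 'I_4) : A0 i j = a0f i j.
Proof. by rewrite mxE. Qed.

Definition isumF (i j : nat) : int :=
  if (i < 4)%N then (if (j %% 4 == i)%N then 1 else 0)
  else let r := (i - 4)%N in
       if (j %/ 4 == r %/ 3)%N then a0f (r %% 3) (j %% 4) else 0.

Lemma IsumE (i : 'I_(3 * 2 + 4)) (j : 'I_(4 * 2)) : Isum 2 A0 i j = isumF i j.
Proof.
rewrite mxE /isumF; case: ifP => // _; case: ifP => // _.
case: (_ =P true) => [H|H].
  by case: (andP H) => Ha Hb; rewrite A0E.
by exfalso; apply: H; rewrite !ltn_pmod.
Qed.

Fixpoint lists (n b : nat) : seq (seq nat) :=
  match n with
  | 0 => [:: [::]]
  | n'.+1 => [seq x :: l | x <- iota 0 b, l <- lists n' b]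
  end.

Lemma in_lists n b s : size s = n -> all (fun x => (x < b)%N) s -> s \in lists n b.
Proof.
elim: n s => [|n IH] [|x s] //= [Hs] /andP[Hx Ha].
by apply: allpairs_f; [rewrite mem_iota | exact: IH].
Qed.

Definition okd (d : int) := (d == 0) || (d == 1) || (d == -1).

Definition check := all (fun k => all (fun s1 => all (fun s2 =>
  okd (ldet k (fun i j => a0f (nth 0%N s1 i) (nth 0%N s2 j)))) (lists k 4)) (lists k 3)) (iota 0 4).

Lemma checkP : check.
Proof. by vm_compute. Qed.

Lemma A0_TU : totally_unimodular A0.
Proof.
move=> k f g Hf Hg /=.
have injf : injective f.
  move=> i j E; apply: val_inj; case: (ltngtP i j) => // h.
    by have := Hf _ _ h; rewrite E ltnn.
  by have := Hf _ _ h; rewrite E ltnn.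
have Hk : (k <= 3)%N by have := leq_card f injf; rewrite !card_ord.
set sf := map (fun i => val (f i)) (enum 'I_k).
set sg := map (fun i => val (g i)) (enum 'I_k).
have Hsf : size sf = k by rewrite size_map size_enum_ord.
have Hsg : size sg = k by rewrite size_map size_enum_ord.
have H : okd (ldet k (fun i j => a0f (nth 0%N sf i) (nth 0%N sg j))).
  have := checkP; move/allP/(_ k); rewrite mem_iota ltnS Hk => /(_ isT).
  have Af : all (fun x => (x < 3)%N) sf by apply/allP => x /mapP [i _ ->]; exact: ltn_ord.
  have Ag : all (fun x => (x < 4)%N) sg by apply/allP => x /mapP [i _ ->]; exact: ltn_ord.
  move/allP/(_ sf (in_lists Hsf Af)) => /allP/(_ sg (in_lists Hsg Ag)).
  done.
rewrite (det_ldet (F := fun i j => a0f (nth 0%N sf i) (nth 0%N sg j))).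
  by move: H; rewrite /okd => /orP [/orP [/eqP -> | /eqP ->] | /eqP ->]; auto.
move=> i j; rewrite mxE A0E /sf /sg.
rewrite (nth_map i) ?size_enum_ord ?ltn_ord // (nth_map j) ?size_enum_ord ?ltn_ord //.
by congr (a0f (val (f _)) (val (g _))); apply: val_inj; rewrite /= nth_enum_ord.
Qed.

Lemma selRowsE (i : 'I_6) : (selRows i : nat) = nth 0%N [:: 0; 3; 4; 6; 7; 8]%N i.
Proof. by rewrite /selRows inordK //; case: i => [[|[|[|[|[|[|//]]]]]]]. Qed.

Lemma selColsE (i : 'I_6) : (selCols i : nat) = nth 0%N [:: 0; 1; 3; 4; 6; 7]%N i.
Proof. by rewrite /selCols inordK //; case: i => [[|[|[|[|[|[|//]]]]]]]. Qed.

Lemma det6 : \det (mxsub selRows selCols (Isum 2 A0)) = -2.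
Proof.
rewrite (det_ldet (F := fun i j => isumF (nth 0%N [:: 0; 3; 4; 6; 7; 8]%N i)
                                         (nth 0%N [:: 0; 1; 3; 4; 6; 7]%N j))).
  by vm_compute.
by move=> i j; rewrite mxE IsumE selRowsE selColsE.
Qed.

Lemma incr_rows : incr_sel selRows.
Proof.
move=> i j; rewrite !selRowsE.
by case: i => [[|[|[|[|[|[|//]]]]]] ?]; case: j => [[|[|[|[|[|[|//]]]]]] ?].
Qed.

Lemma incr_cols : incr_sel selCols.
Proof.
move=> i j; rewrite !selColsE.
by case: i => [[|[|[|[|[|[|//]]]]]] ?]; case: j => [[|[|[|[|[|[|//]]]]]] ?].
Qed.

Theorem mainTheorem16 :
  totally_unimodular A0 /\
  ~ totally_unimodular (Isum 2 A0) /\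
  \det (mxsub selRows selCols (Isum 2 A0)) = -2.
Proof.
split; first exact: A0_TU.
split; last exact: det6.
move=> H; have := H 6%N selRows selCols incr_rows incr_cols.
by rewrite /= det6 => [[|[|]]].
Qed.
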